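(* For every integer $N\ge 12$, there exists an equal norm tight integer frame with $2N$ elements in $\mathcal{H}_5$.
   Context: $\mathcal{H}_M$ is the real $M$-dimensional Hilbert space, identified with $\mathbb{R}^M$ via a fixed orthonormal basis. An equal norm tight integer frame (ENTIF) with $N$ elements in $\mathcal{H}_M$ is an $M\times N$ integer matrix $A$ of rank $M$ with $AA^T=\lambda I_M$ for some $\lambda>0$ and all columns of the same Euclidean norm. *)

(* Defs.v *)
From mathcomp Require Import all_boot all_order all_algebra.
Set Implicit Arguments. Unset Strict Implicit. Unset Printing Implicit Defensive.
Import Order.TTheory GRing.Theory Num.Theory.
Local Open Scope ring_scope.

(* Equal norm tight integer frame with N elements in H_M (= R^M):
   an M x N integer matrix A of rank M (rank over the reals; since A has
   integer entries we compute it over rat, which gives the same rank),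
   with A A^T = lambda I_M for some lambda > 0, and all columns of the
   same Euclidean norm (equivalently same squared norm, an integer). *)
Definition is_ENTIF (M N : nat) (A : 'M[int]_(M, N)) : Prop :=
  \rank (map_mx (intr : int -> rat) A) = M /\
  (exists lambda : int, 0 < lambda /\ A *m A^T = lambda%:M) /\
  (forall j k : 'I_N, \sum_(i < M) A i j ^+ 2 = \sum_(i < M) A i k ^+ 2).

(* Main.v *)
Require Import Defs.
From mathcomp Require Import all_boot all_order all_algebra.
From mathcomp Require Import zify.
Set Implicit Arguments. Unset Strict Implicit. Unset Printing Implicit Defensive.
Import Order.TTheory GRing.Theory Num.Theory.

Local Open Scope ring_scope.

Definition PF (n : nat) : Prop :=
  exists A : 'M[int]_(5, n),
    (exists lambda : int, 0 < lambda /\ A *m A^T = lambda%:M) /\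
    (forall j : 'I_n, \sum_(i < 5) A i j ^+ 2 = 5).

Lemma PF_add n m : PF n -> PF m -> PF (n + m).
Proof.
move=> [A [[la [la0 hA]] cA]] [B [[lb [lb0 hB]] cB]].
exists (row_mx A B); split.
  exists (la + lb); split; first by rewrite addr_gt0.
  by rewrite tr_row_mx mul_row_col hA hB raddfD.
move=> j; case: (split_ordP j) => k ->.
  by rewrite -(cA k); apply: eq_bigr => i _; rewrite row_mxEl.
by rewrite -(cB k); apply: eq_bigr => i _; rewrite row_mxEr.
Qed.

Lemma rank_tight n (A : 'M[int]_(5, n)) (la : int) :
  0 < la -> A *m A^T = la%:M -> \rank (map_mx (intr : int -> rat) A) = 5%N.
Proof.
move=> la0 hA; apply/eqP; rewrite eqn_leq rank_leq_row /=.
set A' := map_mx _ A.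
have hl : (la%:~R : rat) != 0 by rewrite intr_eq0 gt_eqF.
apply: (@mulmx1_min_rank _ 5 5 n A' ((la%:~R : rat)^-1%:M) (A'^T)).
rewrite -mulmxA.
have -> : A' *m A'^T = (la%:~R : rat)%:M.
  rewrite /A' map_trmx -map_mxM hA; apply/matrixP => i j; rewrite !mxE.
  by case: (i == j); rewrite ?mulr1n ?mulr0n.
apply/matrixP => i j; rewrite !mxE.
rewrite (bigD1 i) //= big1 ?addr0; last first.
  by move=> k /negbTE ki; rewrite !mxE eq_sym ki mulr0n mul0r.
rewrite !mxE eqxx mulr1n.
case: (i == j); rewrite ?mulr1n ?mulr0n ?mulr0 //.
by rewrite mulVf.
Qed.

Definition mk (n : nat) (rs : seq (seq int)) : 'M[int]_(5, n) :=
  \matrix_(i < 5, j < n) nth 0 (nth [::] rs i) j.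

Definition A8 := mk 8
  [:: [:: 2; 2; 0; 0; 0; 0; 0; 0];
      [:: 1; -1; 1; 1; 1; 1; 1; 1];
      [:: 0; 0; 2; 0; 0; 0; 0; -2];
      [:: 0; 0; 0; 2; 0; 0; -2; 0];
      [:: 0; 0; 0; 0; 2; -2; 0; 0]].

Definition A10 := mk 10
  [:: [:: 2; 2; 1; 1; 0; 0; 0; 0; 0; 0];
      [:: 1; 1; -2; -2; 0; 0; 0; 0; 0; 0];
      [:: 0; 0; 0; 0; 2; 2; 1; 1; 0; 0];
      [:: 0; 0; 0; 0; 1; 0; 0; -2; 2; 1];
      [:: 0; 0; 0; 0; 0; 1; -2; 0; 1; -2]].

Lemma PF8 : PF 8.
Proof.
exists A8; split.
  exists 8; split => //.
  apply/matrixP => i j; rewrite !mxE !big_ord_recr big_ord0 /= !mxE.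
  by case: i => [[|[|[|[|[|i]]]]] Hi]; case: j => [[|[|[|[|[|j]]]]] Hj].
move=> j; rewrite !big_ord_recr big_ord0 /= !mxE.
by case: j => [[|[|[|[|[|[|[|[|j]]]]]]]] Hj].
Qed.

Lemma PF10 : PF 10.
Proof.
exists A10; split.
  exists 10; split => //.
  apply/matrixP => i j; rewrite !mxE !big_ord_recr big_ord0 /= !mxE.
  by case: i => [[|[|[|[|[|i]]]]] Hi]; case: j => [[|[|[|[|[|j]]]]] Hj].
move=> j; rewrite !big_ord_recr big_ord0 /= !mxE.
by case: j => [[|[|[|[|[|[|[|[|[|[|j]]]]]]]]]] Hj].
Qed.

Lemma PF_all N : (12 <= N)%N -> PF (2 * N).
Proof.
elim: N {-2}N (leqnn N) => [|M IH] N hN h12.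
  by move: (leq_trans h12 hN).
have [/eqP->|] := boolP (N == 12)%N; first by move=> *; exact: (PF_add (PF_add PF8 PF8) PF8).
have [/eqP->|] := boolP (N == 13)%N; first by move=> *; exact: (PF_add (PF_add PF8 PF8) PF10).
have [/eqP->|] := boolP (N == 14)%N; first by move=> *; exact: (PF_add (PF_add PF8 PF10) PF10).
have [/eqP->|] := boolP (N == 15)%N; first by move=> *; exact: (PF_add (PF_add PF10 PF10) PF10).
move=> n15 n14 n13 n12.
have h : (2 * N = 2 * (N - 4) + 8)%N by lia.
rewrite h; apply: PF_add; last exact: PF8.
apply: IH; lia.
Qed.

Theorem corollary6p8 :
  forall N : nat, (12 <= N)%N ->
    exists A : 'M[int]_(5, 2 * N), is_ENTIF A.
Proof.
move=> N hN; have [A [[la [la0 hA]] cA]] := PF_all hN.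
exists A; split; first exact: rank_tight la0 hA.
split; first by exists la.
by move=> j k; rewrite !cA.
Qed.
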